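(* The symmetric algebra $\mathrm{Sym}(V)$ is a self-dual Hopf algebra under the Hopf pairing determined by $$\left\langle \frac{\deg(v_\alpha)!}{\sqrt{z_\alpha}}\,\overline{v_\alpha},\ \frac{\deg(v_\beta)!}{\sqrt{z_\beta}}\,\overline{v_\beta}\right\rangle=\delta_{\mathrm{sort}(\alpha),\mathrm{sort}(\beta)}$$ for all compositions $\alpha,\beta$.
   Context: $V$ is a graded vector space with a fixed countable homogeneous basis $\{v_1,v_2,\dots\}$, each $\deg(v_i)$ a positive integer and only finitely many $v_i$ of each degree. For a composition (finite sequence of positive integers) $\alpha=(\alpha_1,\dots,\alpha_\ell)$, write $v_\alpha=v_{\alpha_1}\otimes\cdots\otimes v_{\alpha_\ell}$ in the tensor algebra $\mathrm{T}(V)=\bigoplus_n V^{\otimes n}$, whose Hopf structure has the $v_i$ primitive and the concatenation product. $\mathrm{Sym}(V)=\mathrm{T}(V)/I(V)$ where $I(V)$ is the two-sided ideal generated by all $v_iv_j-v_jv_i$; it is a graded commutative and cocommutative Hopf algebra (the $\overline{v_i}$ primitive), $\overline{v_\alpha}$ denotes the class of $v_\alpha$, and $\deg(\overline{v_\alpha})=\sum_i\deg(v_{\alpha_i})$. Notation: $\deg(v_\alpha)!=\deg(v_{\alpha_1})!\cdots\deg(v_{\alpha_\ell})!$; $\mathrm{sort}(\alpha)$ is the rearrangement of the parts of $\alpha$ in decreasing order; $z_\alpha=\prod_{i\ge1}m_i!\,i^{m_i}$ where $m_i=|\{k:\alpha_k=i\}|$. *)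

(* Defs.v *)
From HB Require Import structures.
From mathcomp Require Import all_boot all_order all_algebra.
From mathcomp Require Import finmap monalg.

Set Implicit Arguments.
Unset Strict Implicit.
Unset Printing Implicit Defensive.

Import GRing.Theory Num.Theory.

Local Open Scope ring_scope.

(* Indices of the basis vectors v_1, v_2, ... of V: positive integers. *)
Definition posnat := {n : nat | (0 < n)%N}.

Definition composition := seq posnat.

(* Sym(V) = free commutative algebra on the v_i,
   i.e. the R-span of these monomials, with concatenation-induced product. *)
Notation monom := {cmonom posnat}.

Definition Sym (R : comNzRingType) := {malg R[monom]}.

Definition vgen (R : comNzRingType) (i : posnat) : Sym R := << ucm i >>.

Definition vbar (R : comNzRingType) (alpha : composition) : Sym R :=
  \prod_(i <- alpha) vgen R i.

Definition monom2 := (monom * monom)%type.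
HB.instance Definition _ := Choice.on monom2.

Section Monom2.
Definition one2 : monom2 := (@mone monom, @mone monom).
Definition mul2 (x y : monom2) : monom2 := (mmul x.1 y.1, mmul x.2 y.2).
Fact mul2A : associative mul2.
Proof. by move=> [a b] [c d] [e f]; rewrite /mul2 /= !mulmA. Qed.
Fact mul12 : left_id one2 mul2.
Proof. by move=> [a b]; rewrite /mul2 /= !mul1m. Qed.
Fact mul21 : right_id one2 mul2.
Proof. by move=> [a b]; rewrite /mul2 /= !mulm1. Qed.
Fact unit2 (x y : monom2) : mul2 x y = one2 -> x = one2 /\ y = one2.
Proof.
case: x y => [a b] [c d] [/unitm [-> ->] /unitm [-> ->]]; by [].
Qed.
HB.instance Definition _ := Choice_isMonomialDef.Build monom2
  mul2A mul12 mul21 unit2.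
Fact mul2C : commutative mul2.
Proof. by move=> [a b] [c d]; rewrite /mul2 /= (mulmC a) (mulmC b). Qed.
HB.instance Definition _ := MonomialDef_isConomialDef.Build monom2 mul2C.
End Monom2.

(* Sym(V) (x) Sym(V), with basis the pure tensors m1 (x) m2 of monomials. *)
Definition Sym2 (R : comNzRingType) := {malg R[monom2]}.

Definition mono (R : comNzRingType) (m : monom) : Sym R := << m >>.

Definition tens (R : comNzRingType) (m1 m2 : monom) : Sym2 R := << (m1, m2) >>.

Definition prim_image (R : comNzRingType) (i : posnat) : Sym2 R :=
  tens R (ucm i) (@mone monom) + tens R (@mone monom) (ucm i).

Definition cop_monom (R : comNzRingType) (m : monom) : Sym2 R :=
  \prod_(i <- finmap.enum_fset (finmap.finsupp m)) prim_image R i ^+ (m i).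

Definition coproduct (R : comNzRingType) (x : Sym R) : Sym2 R :=
  \sum_(m <- finmap.enum_fset (msupp x)) x@_m *: cop_monom R m.

(* Counit: the algebra morphism with epsilon(v_i) = 0, i.e. constant term. *)
Definition counit (R : comNzRingType) (x : Sym R) : R := x@_(@mone monom).

Definition bilin_form (R : comNzRingType) (B : Sym R -> Sym R -> R) :=
  (forall (a : R) x x' y, B (a *: x + x') y = a * B x y + B x' y) /\
  (forall (a : R) x y y', B x (a *: y + y') = a * B x y + B x y').

(* <x (x) y, t> for t in Sym(V)(x)Sym(V), where <a(x)b, c(x)d> = B a c * B b d *)
Definition pair2_left (R : comNzRingType) (B : Sym R -> Sym R -> R)
    (x y : Sym R) (t : Sym2 R) : R :=
  \sum_(k <- finmap.enum_fset (msupp t)) t@_k * (B x (mono R k.1) * B y (mono R k.2)).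

Definition pair2_right (R : comNzRingType) (B : Sym R -> Sym R -> R)
    (t : Sym2 R) (x y : Sym R) : R :=
  \sum_(k <- finmap.enum_fset (msupp t)) t@_k * (B (mono R k.1) x * B (mono R k.2) y).

Definition hopf_pairing (R : comNzRingType) (B : Sym R -> Sym R -> R) :=
  [/\ forall x y z, B (x * y) z = pair2_left B x y (coproduct z),
      forall x y z, B x (y * z) = pair2_right B (coproduct x) y z,
      forall z, B 1 z = counit z &
      forall x, B x 1 = counit x].

Definition nondeg_pairing (R : comNzRingType) (B : Sym R -> Sym R -> R) :=
  (forall x, (forall y, B x y = 0) -> x = 0) /\
  (forall y, (forall x, B x y = 0) -> y = 0).

Definition mdegree (deg : posnat -> nat) (m : monom) : nat :=
  (\sum_(i <- finmap.enum_fset (finmap.finsupp m)) m i * deg i)%N.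

Definition homogeneous (R : comNzRingType) (deg : posnat -> nat) (n : nat)
    (x : Sym R) :=
  forall m, m \in msupp x -> mdegree deg m = n.

Definition graded_pairing (R : comNzRingType) (deg : posnat -> nat)
    (B : Sym R -> Sym R -> R) :=
  forall n n' x y, homogeneous deg n x -> homogeneous deg n' y ->
    n <> n' -> B x y = 0.

Definition deg_fact (deg : posnat -> nat) (alpha : composition) : nat :=
  (\prod_(i <- alpha) (deg i)`!)%N.

Definition zee (alpha : composition) : nat :=
  (\prod_(i <- undup alpha) ((count_mem i alpha)`! * (val i) ^ (count_mem i alpha)))%N.

Definition sortc (alpha : composition) : seq nat :=
  sort (fun a b : nat => b <= a)%N (map val alpha).

Definition nvbar (R : rcfType) (deg : posnat -> nat) (alpha : composition)
    : Sym R :=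
  ((deg_fact deg alpha)%:R / Num.sqrt (zee alpha)%:R) *: vbar R alpha.

Definition grading_ok (deg : posnat -> nat) :=
  (forall i, (0 < deg i)%N) /\
  (forall d, exists N, forall i, deg i = d -> (val i <= N)%N).

(* Main.v *)
Require Import Defs.
From HB Require Import structures.
From mathcomp Require Import all_boot all_order all_algebra.
From mathcomp Require Import finmap monalg.
From mathcomp Require Import ring zify.
From Stdlib Require Import FunctionalExtensionality.
Set Implicit Arguments.
Unset Strict Implicit.
Unset Printing Implicit Defensive.
Import Order.TTheory GRing.Theory Num.Theory.
Local Open Scope ring_scope.

Section Work.
Variable R : rcfType.
Variable deg : posnat -> nat.

Lemma sum_supp_incl (K : choiceType) (g : {malg R[K]}) (F : K -> R -> R) (S : {fset K}) :
  (msupp g `<=` S)%fset -> (forall k, F k 0 = 0) ->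
  \sum_(k <- msupp g) F k g@_k = \sum_(k <- S) F k g@_k.
Proof.
move=> le F0; apply: big_fset_incl => // k _ kn.
by rewrite mcoeff_outdom.
Qed.

Lemma supp1 (K : choiceType) (g : {malg R[K]}) (k0 : K) (C : R) :
  \sum_(k <- msupp g) g@_k * ((k == k0)%:R * C) = g@_k0 * C.
Proof.
rewrite (@sum_supp_incl _ g (fun k c => c * ((k == k0)%:R * C)) (msupp g `|` [fset k0])%fset);
  [|exact: fsubsetUl| by move=> k; rewrite mul0r].
rewrite (big_fsetD1 k0) /=; last by rewrite in_fsetU in_fset1 eqxx orbT.
rewrite eqxx mul1r big1_fset ?addr0 // => k; rewrite in_fsetD1 => /andP[/negbTE -> _] _.
by rewrite mul0r mulr0.
Qed.

Definition Lf (K : choiceType) (G : K -> R) (g : {malg R[K]}) : R :=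
  \sum_(k <- msupp g) g@_k * G k.

Lemma Lf_lin (K : choiceType) (G : K -> R) (a : R) (x x' : {malg R[K]}) :
  Lf G (a *: x + x') = a * Lf G x + Lf G x'.
Proof.
rewrite /Lf.
set S := (msupp x `|` msupp x')%fset.
have h0 : forall k, (0 : R) * G k = 0 by move=> k; rewrite mul0r.
rewrite (@sum_supp_incl _ _ (fun k c => c * G k) S) //; last first.
  apply: fsubset_trans (msuppD_le _ _) _; apply: fsetUSS => //; exact: msuppZ_le.
rewrite (@sum_supp_incl _ x (fun k c => c * G k) S) ?fsubsetUl //.
rewrite (@sum_supp_incl _ x' (fun k c => c * G k) S) ?fsubsetUr //.
rewrite mulr_sumr -big_split /=; apply: eq_bigr => k _.
by rewrite mcoeffD mcoeffZ mulrDl mulrA.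
Qed.

Lemma Lf0 (K : choiceType) (G : K -> R) : Lf G 0 = 0.
Proof. by rewrite /Lf msupp0 big_seq_fset0. Qed.

Lemma lin_sum (V : lmodType R) (f : V -> R)
   (hf : forall a u v, f (a *: u + v) = a * f u + f v) (I : Type) (r : seq I) (F : I -> V) :
  f (\sum_(i <- r) F i) = \sum_(i <- r) f (F i).
Proof.
have f0 : f 0 = 0.
  have := hf 1 0 0; rewrite scaler0 addr0 mul1r => h.
  by apply: (addrI (f 0)); rewrite -h addr0.
apply: (big_morph f) => // u v; by rewrite -(scale1r u) hf mul1r scale1r.
Qed.


Lemma divU_mul (a : monom) i : (0 < a i)%N -> mmul (divcm a (ucm i)) (ucm i) = a.
Proof.
move=> ha; apply/eqP/cmP => j; rewrite cmM divcmE cmU.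
case: eqP => [<-|_]; last by rewrite subn0 addn0.
by rewrite subnK.
Qed.

Lemma mulU_eq (x a : monom) i :
  (mmul x (ucm i) == a) = (0 < a i)%N && (x == divcm a (ucm i)).
Proof.
apply/eqP/andP => [<-|[ha /eqP ->]]; last exact: divU_mul.
split; first by rewrite cmM cmU eqxx addn1.
apply/cmP => j; rewrite divcmE cmM cmU addnK //.
Qed.

Lemma mon_ind (P : monom -> Prop) : P mone ->
  (forall m i, P m -> P (mmul m (ucm i))) -> forall m, P m.
Proof.
move=> P1 PS m; move: {2}(mdeg m) (erefl (mdeg m)) => n; elim: n m => [|n IH] m hm.
  by rewrite (mdeg_eq0I hm).
have memE (A : {fset posnat}) x : (x \in A) = (x \in enum_fset A) by [].
case E: (enum_fset (finsupp m)) => [|i s].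
  suff : m = mone by move=> h; move: hm; rewrite h mdeg1.
  apply/eqP/cmP => j; rewrite cm1; apply/eqP; rewrite cmE_eq0.
  by rewrite memE E.
have hi : (0 < m i)%N by rewrite lt0n cmE_neq0 memE E mem_head.
rewrite -(divU_mul hi); apply: PS; apply: IH.
move: hm; rewrite -{1}(divU_mul hi) mdegM mdegU addn1 => -[].
done.
Qed.


Definition cw (i : posnat) : R := (val i)%:R / (((deg i)`!)%:R ^+ 2).
Definition wf (m : monom) (i : posnat) : R := ((m i)`!)%:R * cw i ^+ (m i).
Definition w (m : monom) : R := \prod_(i <- finsupp m) wf m i.

Lemma wE (m : monom) (S : {fset posnat}) : (finsupp m `<=` S)%fset -> w m = \prod_(i <- S) wf m i.
Proof.
move=> le; rewrite /w; apply: big_fset_incl => // i _.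
by rewrite -cmE_eq0 => /eqP h; rewrite /wf h fact0 mul1r expr0.
Qed.

Lemma w1 : w mone = 1.
Proof. by rewrite /w mdom1 big_seq_fset0. Qed.

Lemma cw_neq0 i : cw i != 0.
Proof.
rewrite /cw mulf_neq0 // ?invr_eq0 ?expf_neq0 // pnatr_eq0 -lt0n ?fact_gt0 //.
exact: (valP i).
Qed.

Lemma w_neq0 (m : monom) : w m != 0.
Proof.
rewrite /w prodf_seq_neq0; apply/allP => i _ /=.
by rewrite /wf mulf_neq0 ?expf_neq0 ?cw_neq0 // pnatr_eq0 -lt0n fact_gt0.
Qed.

Lemma w_mulU (m : monom) i : w (mmul m (ucm i)) = ((m i).+1)%:R * cw i * w m.
Proof.
set S := (finsupp m `|` [fset i])%fset.
rewrite (@wE (mmul m (ucm i)) S); last by rewrite mdomD mdomU.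
rewrite (@wE m S) ?fsubsetUl //.
have iS : i \in S by rewrite in_fsetU in_fset1 eqxx orbT.
have h1 : wf (mmul m (ucm i)) i = ((m i).+1)%:R * cw i * wf m i.
  rewrite /wf cmM cmU eqxx addn1 factS natrM exprS; move: (cw i) => C.
  by rewrite -!mulrA (mulrCA C).
have h2 : \prod_(j <- (S `\ i)%fset) wf (mmul m (ucm i)) j = \prod_(j <- (S `\ i)%fset) wf m j.
  apply: eq_big_seq => j; rewrite in_fsetD1 => /andP[ne _].
  by rewrite /wf cmM cmU eq_sym (negbTE ne) addn0.
by rewrite (big_fsetD1 i iS) (big_fsetD1 i iS) /= h1 h2 -!mulrA.
Qed.

Definition B0 (x y : Sym R) : R := \sum_(m <- msupp x) x@_m * y@_m * w m.

Lemma B0E x y : B0 x y = Lf (fun m => y@_m * w m) x.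
Proof. by apply: eq_bigr => m _; rewrite mulrA. Qed.

Lemma B0_linl a x x' y : B0 (a *: x + x') y = a * B0 x y + B0 x' y.
Proof. by rewrite !B0E Lf_lin. Qed.

Lemma B0_sym x y : B0 x y = B0 y x.
Proof.
rewrite /B0 (@sum_supp_incl _ x (fun k c => c * y@_k * w k) (msupp x `|` msupp y)%fset);
  [|exact: fsubsetUl|by move=> k; rewrite !mul0r].
rewrite (@sum_supp_incl _ y (fun k c => c * x@_k * w k) (msupp x `|` msupp y)%fset);
  [|exact: fsubsetUr|by move=> k; rewrite !mul0r].
by apply: eq_bigr => k _; rewrite (mulrC (y@_k)).
Qed.

Lemma B0_linr a x y y' : B0 x (a *: y + y') = a * B0 x y + B0 x y'.
Proof. by rewrite !(B0_sym x) B0_linl. Qed.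

Lemma B0_Ur x c : B0 x << c >> = x@_c * w c.
Proof.
rewrite B0E /Lf -(supp1 x c).
apply: eq_bigr => m _; rewrite mcoeffU1 eq_sym.
by case: eqP => [->|_]; rewrite ?mul0r ?mulr0.
Qed.

Lemma B0_Ul x c : B0 << c >> x = x@_c * w c.
Proof. by rewrite B0_sym B0_Ur. Qed.

Lemma B0_UU a b : B0 << a >> << b >> = (a == b)%:R * w a.
Proof. by rewrite B0_Ul mcoeffU1 eq_sym. Qed.


Lemma UZ (K : choiceType) (c : R) (k : K) : << c *g k >> = c *: (<< k >> : {malg R[K]}).
Proof. by apply/malgP => k'; rewrite mcoeffZ !mcoeffU mulr_natr. Qed.

Lemma lin0 (V : lmodType R) (f : V -> R)
   (hf : forall a u v, f (a *: u + v) = a * f u + f v) : f 0 = 0.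
Proof.
have := hf 1 0 0; rewrite scaler0 addr0 mul1r => h.
by apply: (addrI (f 0)); rewrite -h addr0.
Qed.

Lemma EXP (K : choiceType) (f : {malg R[K]} -> R)
   (hf : forall a u v, f (a *: u + v) = a * f u + f v) x :
  f x = \sum_(k <- msupp x) x@_k * f << k >>.
Proof.
rewrite {1}(monalgE x) (lin_sum hf); apply: eq_bigr => k _.
by rewrite UZ -[_ *: _]addr0 hf (lin0 hf) addr0.
Qed.

Lemma supp1n (K : choiceType) (g : {malg R[K]}) (k0 : K) :
  \sum_(k <- msupp g) g@_k *+ (k == k0) = g@_k0.
Proof.
rewrite -[RHS]mulr1 -supp1; apply: eq_bigr => k _; by rewrite mulr1 mulr_natr.
Qed.

Lemma cop1 : cop_monom R mone = 1.
Proof. by rewrite /cop_monom mdom1 big_seq_fset0. Qed.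

Lemma copE (m : monom) (S : {fset posnat}) : (finsupp m `<=` S)%fset ->
  cop_monom R m = \prod_(i <- S) prim_image R i ^+ m i.
Proof.
move=> le; rewrite /cop_monom; apply: big_fset_incl => // i _.
by rewrite -cmE_eq0 => /eqP ->; rewrite expr0.
Qed.

Lemma copM (m : monom) i : cop_monom R (mmul m (ucm i)) = cop_monom R m * prim_image R i.
Proof.
set S := (finsupp m `|` [fset i])%fset.
rewrite (@copE (mmul m (ucm i)) S); last by rewrite mdomD mdomU.
rewrite (@copE m S) ?fsubsetUl //.
have iS : i \in S by rewrite in_fsetU in_fset1 eqxx orbT.
have h1 : prim_image R i ^+ (mmul m (ucm i)) i = prim_image R i ^+ m i * prim_image R i.
  by rewrite cmM cmU eqxx addn1 exprSr.
have h2 : \prod_(j <- (S `\ i)%fset) prim_image R j ^+ (mmul m (ucm i)) j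
        = \prod_(j <- (S `\ i)%fset) prim_image R j ^+ m j.
  apply: eq_big_seq => j; rewrite in_fsetD1 => /andP[ne _].
  by rewrite cmM cmU eq_sym (negbTE ne) addn0.
have eL : \prod_(j <- S) prim_image R j ^+ (mmul m (ucm i)) j =
  (prim_image R i ^+ m i * prim_image R i) * \prod_(j <- (S `\ i)%fset) prim_image R j ^+ m j.
  rewrite -h1 -h2; exact: (big_fsetD1 _ iS).
have eR : \prod_(j <- S) prim_image R j ^+ m j =
  prim_image R i ^+ m i * \prod_(j <- (S `\ i)%fset) prim_image R j ^+ m j.
  exact: (big_fsetD1 _ iS).
rewrite eL eR; exact: mulrAC.
Qed.

Lemma coefT1 (g : Sym2 R) i (a b : monom) :
  (g * tens R (ucm i) (@mone monom))@_((a, b) : monom2) =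
    if (0 < a i)%N then g@_((divcm a (ucm i), b) : monom2) else 0.
Proof.
rewrite mcoeffMl /tens msuppU1.
under eq_bigr => k1 _ do rewrite big_seq_fset1 mcoeffUU mulr1.
have E k1 : (mmul k1 ((ucm i, mone) : monom2) == ((a, b) : monom2)) =
   (0 < a i)%N && (k1 == ((divcm a (ucm i), b) : monom2)).
  case: k1 => k11 k12; rewrite /mmul /= /mul2 /= xpair_eqE mulm1 mulU_eq.
  by rewrite xpair_eqE -andbA.
under eq_bigr => k1 _ do rewrite E.
case: (0 < a i)%N; last by rewrite big1.
exact: supp1n.
Qed.

Lemma coefT2 (g : Sym2 R) i (a b : monom) :
  (g * tens R (@mone monom) (ucm i))@_((a, b) : monom2) =
    if (0 < b i)%N then g@_((a, divcm b (ucm i)) : monom2) else 0.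
Proof.
rewrite mcoeffMl /tens msuppU1.
under eq_bigr => k1 _ do rewrite big_seq_fset1 mcoeffUU mulr1.
have E k1 : (mmul k1 ((mone, ucm i) : monom2) == ((a, b) : monom2)) =
   (0 < b i)%N && (k1 == ((a, divcm b (ucm i)) : monom2)).
  case: k1 => k11 k12; rewrite /mmul /= /mul2 /= xpair_eqE mulm1 mulU_eq.
  by rewrite xpair_eqE andbCA.
under eq_bigr => k1 _ do rewrite E.
case: (0 < b i)%N; last by rewrite big1.
exact: supp1n.
Qed.


End Work.

Section Work2.
Variable R : rcfType.
Variable deg : posnat -> nat.
Local Notation w := (w R deg).
Local Notation cw := (cw R deg).
Lemma cancelU (x y z : monom) i :
  (mmul (mmul x (ucm i)) y == mmul z (ucm i)) = (mmul x y == z).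
Proof.
apply/cmP/cmP => h j; move: (h j); rewrite !cmM cmU; lia.
Qed.

Lemma divl_eq (a b c : monom) i : (0 < a i)%N ->
  (mmul (divcm a (ucm i)) b == c) = (mmul a b == mmul c (ucm i)).
Proof. by move=> ha; rewrite -{2}(divU_mul ha) cancelU. Qed.

Lemma divr_eq (a b c : monom) i : (0 < b i)%N ->
  (mmul a (divcm b (ucm i)) == c) = (mmul a b == mmul c (ucm i)).
Proof. by move=> hb; rewrite mulmC divl_eq // mulmC. Qed.

Lemma divU_i (a : monom) i : (0 < a i)%N -> ((divcm a (ucm i)) i).+1 = a i.
Proof. move=> ha; rewrite divcmE cmU eqxx; lia. Qed.

Lemma KEY (c : monom) : forall a b : monom,
  (cop_monom R c)@_((a, b) : monom2) * w a * w b = (mmul a b == c)%:R * w c.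
Proof.
elim/mon_ind: c => [|c i IH] a b.
  rewrite cop1 mcoeff1 w1.
  have -> : ((a, b) == (mone : monom2)) = ((a == mone) && (b == mone)) by [].
  rewrite cmM_eq1; case: eqP => [->|_]; case: eqP => [->|_];
    by rewrite ?w1 ?mul0r ?mulr0 ?mul1r ?mulr1.
rewrite copM.
rewrite /prim_image.
rewrite mulrDr.
rewrite mcoeffD.
rewrite !mulrDl.
have h := coefT1 (cop_monom R c) i a b.
rewrite [X in X * _ * _ + _]h.
rewrite coefT2.
set E := (mmul a b == mmul c (ucm i)).
have C1 : (if (0 < a i)%N then (cop_monom R c)@_((divcm a (ucm i), b) : monom2) else 0)
   * w a * w b = (a i)%:R * cw i * (E%:R * w c).
  case: ifP => ha; last by move/negbT: ha; rewrite -eqn0Ngt => /eqP ->; rewrite !mul0r.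
  have wa : w a = (a i)%:R * cw i * w (divcm a (ucm i)).
    by rewrite -{1}(divU_mul ha) w_mulU divU_i.
  rewrite wa /E -divl_eq // -IH; ring.
have C2 : (if (0 < b i)%N then (cop_monom R c)@_((a, divcm b (ucm i)) : monom2) else 0)
   * w a * w b = (b i)%:R * cw i * (E%:R * w c).
  case: ifP => hb; last by move/negbT: hb; rewrite -eqn0Ngt => /eqP ->; rewrite !mul0r.
  have wb : w b = (b i)%:R * cw i * w (divcm b (ucm i)).
    by rewrite -{1}(divU_mul hb) w_mulU divU_i.
  rewrite wb /E -divr_eq // -IH; ring.
rewrite C1 C2 w_mulU.
case: (boolP E) => hE; last by rewrite !mul0r !mulr0 addr0.
have : (a i + b i)%N = (c i).+1.
  by move/eqP: hE => /(congr1 (fun m : monom => m i)); rewrite !cmM cmU eqxx addn1.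
move=> hh; rewrite -hh natrD; ring.
Qed.

End Work2.

Section Work3.
Variable R : rcfType.
Variable deg : posnat -> nat.
Local Notation w := (w R deg).
Local Notation B0 := (@B0 R deg).

Lemma P_lin_t (B : Sym R -> Sym R -> R) x y a t t' :
  pair2_left B x y (a *: t + t') = a * pair2_left B x y t + pair2_left B x y t'.
Proof. exact: Lf_lin. Qed.

Lemma P_lin_x x x' y a t :
  pair2_left B0 (a *: x + x') y t = a * pair2_left B0 x y t + pair2_left B0 x' y t.
Proof.
rewrite /pair2_left mulr_sumr -big_split /=; apply: eq_bigr => k _.
by rewrite B0_linl mulrDl mulrDr -mulrA mulrCA.
Qed.

Lemma P_lin_y x y y' a t :
  pair2_left B0 x (a *: y + y') t = a * pair2_left B0 x y t + pair2_left B0 x y' t.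
Proof.
rewrite /pair2_left mulr_sumr -big_split /=; apply: eq_bigr => k _.
by rewrite B0_linl mulrDr mulrDr (mulrCA _ a) (mulrCA t@_k).
Qed.

Lemma UU (a b : monom) : (<< a >> : Sym R) * << b >> = << mmul a b >>.
Proof. by rewrite malgM_def fgmulUU mulr1. Qed.

Lemma B0_mono (a k : monom) : B0 << a >> (mono R k) = (a == k)%:R * w a.
Proof. exact: B0_UU. Qed.

Lemma hopf_mono (a b m : monom) :
  B0 (<< a >> * << b >>) << m >> = pair2_left B0 << a >> << b >> (cop_monom R m).
Proof.
rewrite UU B0_UU /pair2_left.
have e k : B0 << a >> (mono R k.1) * B0 << b >> (mono R k.2) =
   (k == ((a, b) : monom2))%:R * (w a * w b).
  case: k => k1 k2.
  rewrite [X in X * _ = _](B0_mono a k1) [X in _ * X = _](B0_mono b k2).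
  rewrite xpair_eqE (eq_sym k1) (eq_sym k2).
  by case: (a == k1); case: (b == k2); rewrite ?mul0r ?mul1r ?mulr0 ?mulr1.
under eq_bigr => k _ do rewrite e.
rewrite supp1 mulrA KEY.
by case: eqP => [->|_]; rewrite ?mul0r.
Qed.

End Work3.

Section Work4.
Variable R : rcfType.
Variable deg : posnat -> nat.
Local Notation w := (w R deg).
Local Notation B0 := (@B0 R deg).

Definition islin (f : Sym R -> R) := forall a u v, f (a *: u + v) = a * f u + f v.

Lemma lin_eq (f g : Sym R -> R) : islin f -> islin g ->
  (forall k, f << k >> = g << k >>) -> forall x, f x = g x.
Proof.
move=> hf hg h x; rewrite (EXP hf) (EXP hg); apply: eq_bigr => k _; by rewrite h.
Qed.

Lemma linZ (V : lmodType R) (f : V -> R) : (forall a u v, f (a *: u + v) = a * f u + f v) ->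
  forall a u, f (a *: u) = a * f u.
Proof. by move=> hf a u; rewrite -[a *: u]addr0 hf (lin0 hf) addr0. Qed.

Lemma coprod_expand x y z :
  pair2_left B0 x y (coproduct z) =
  \sum_(m <- msupp z) z@_m * pair2_left B0 x y (cop_monom R m).
Proof.
rewrite /coproduct (lin_sum (fun a u v => P_lin_t B0 x y a u v)).
apply: eq_bigr => m _; exact: (linZ (fun a u v => P_lin_t B0 x y a u v)).
Qed.

Lemma hopf1 x y z : B0 (x * y) z = pair2_left B0 x y (coproduct z).
Proof.
rewrite coprod_expand (EXP (fun a u v => B0_linr deg a (x * y) u v) z).
apply: eq_bigr => m _; congr (_ * _).
move: x; apply: (lin_eq (f := fun u => B0 (u * y) << m >>)
                        (g := fun u => pair2_left B0 u y (cop_monom R m))).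
- by move=> a u v; rewrite mulrDl -scalerAl B0_linl.
- by move=> a u v; rewrite P_lin_x.
move=> a; move: y; apply: (lin_eq (f := fun v => B0 (<< a >> * v) << m >>)
                        (g := fun v => pair2_left B0 << a >> v (cop_monom R m))).
- by move=> c u v; rewrite mulrDr -scalerAr B0_linl.
- by move=> c u v; rewrite P_lin_y.
by move=> b; rewrite hopf_mono.
Qed.


Lemma hopf2 x y z : B0 x (y * z) = pair2_right B0 (coproduct x) y z.
Proof.
rewrite B0_sym hopf1 /pair2_left /pair2_right; apply: eq_bigr => k _.
by rewrite [B0 y _]B0_sym [B0 z _]B0_sym.
Qed.

Lemma B0_1l z : B0 1 z = counit z.
Proof. by rewrite -mpolyC1E B0_Ul w1 mulr1. Qed.

Lemma B0_1r z : B0 z 1 = counit z.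
Proof. by rewrite B0_sym B0_1l. Qed.

Lemma B0_hopf : hopf_pairing B0.
Proof. split; [exact: hopf1 | exact: hopf2 | exact: B0_1l | exact: B0_1r]. Qed.

Lemma B0_nondeg : nondeg_pairing B0.
Proof.
have H x : (forall y, B0 x y = 0) -> x = 0.
  move=> h; apply/malgP => k; have := h << k >>; rewrite B0_Ur mcoeff0.
  by move/eqP; rewrite mulf_eq0 (negbTE (w_neq0 _ _ _)) orbF => /eqP.
split=> // y h; apply: H => x; by rewrite B0_sym.
Qed.

Lemma B0_graded : graded_pairing deg B0.
Proof.
move=> n n' x y hx hy nn; rewrite /B0 big1_fset // => m mx _.
have [my|my] := boolP (m \in msupp y).
  by exfalso; apply: nn; rewrite -(hx m mx) -(hy m my).
by rewrite (mcoeff_outdom my) mulr0 mul0r.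
Qed.

End Work4.

Section Work5.
Variable R : rcfType.
Variable deg : posnat -> nat.
Local Notation w := (w R deg).
Local Notation B0 := (@B0 R deg).

Definition mon (al : composition) : monom := \big[mmul/mone]_(i <- al) ucm i.

Lemma monE al j : mon al j = count_mem j al.
Proof.
elim: al => [|i al IH]; first by rewrite /mon big_nil cm1.
by rewrite /mon big_cons cmM cmU -/(mon al) IH.
Qed.

Lemma vbarE al : vbar R al = << mon al >>.
Proof.
elim: al => [|i al IH]; first by rewrite /vbar /mon !big_nil -mpolyC1E.
rewrite /vbar big_cons.
change (vgen R i * vbar R al = << mon (i :: al) >>).
rewrite IH /mon big_cons -/(mon al).
exact: (UU R (ucm i) (mon al)).
Qed.

Lemma mon_perm al be : (mon al == mon be) = perm_eq al be.
Proof.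
apply/cmP/idP => h.
  by rewrite /perm_eq; apply/allP => j _ /=; rewrite -!monE h.
by move=> j; rewrite !monE; move/permP: h => ->.
Qed.

Lemma sortc_perm al be : (sortc al == sortc be) = perm_eq al be.
Proof.
have tot : total (fun a b : nat => (b <= a)%N) by move=> a b; exact: leq_total.
have tr : transitive (fun a b : nat => (b <= a)%N).
  by move=> y x z h1 h2; exact: leq_trans h2 h1.
have anti : antisymmetric (fun a b : nat => (b <= a)%N).
  by move=> x y h; apply/eqP; rewrite eqn_leq andbC.
rewrite /sortc; apply/eqP/idP => h.
  apply: (@perm_map_inj _ _ val); first exact: val_inj.
  exact/(perm_sortP tot tr anti).
by apply/(perm_sortP tot tr anti); exact: perm_map.
Qed.

Lemma perm_supp al : perm_eq (undup al) (enum_fset (finsupp (mon al))).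
Proof.
apply: uniq_perm; [exact: undup_uniq | exact: fset_uniq | move=> j].
have -> : (j \in enum_fset (finsupp (mon al))) = (j \in finsupp (mon al)) by [].
by rewrite mem_undup -cmE_neq0 monE -lt0n -has_count has_pred1.
Qed.

Definition Zm (m : monom) : nat := \prod_(j <- finsupp m) ((m j)`! * (val j) ^ (m j))%N.
Definition Dm (m : monom) : nat := \prod_(j <- finsupp m) ((deg j)`! ^ (m j))%N.

Lemma zeeE al : zee al = Zm (mon al).
Proof.
rewrite /zee /Zm; under eq_bigr => j _ do rewrite -monE.
exact: perm_big (perm_supp al).
Qed.

Lemma dfE al : deg_fact deg al = Dm (mon al).
Proof.
rewrite /deg_fact -big_undup_iterop_count.
under eq_bigr => j _ do rewrite Monoid.iteropE iter_muln_1 -monE.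
exact: perm_big (perm_supp al).
Qed.

Lemma Zm_gt0 m : (0 < Zm m)%N.
Proof.
apply: prodn_gt0 => j; rewrite muln_gt0 fact_gt0 expn_gt0 /=.
by rewrite (valP j).
Qed.

Lemma Dm_gt0 m : (0 < Dm m)%N.
Proof. by apply: prodn_gt0 => j; rewrite expn_gt0 fact_gt0. Qed.

Lemma wZD m : w m = (Zm m)%:R / ((Dm m)%:R ^+ 2).
Proof.
rewrite /w /Zm /Dm !natr_prod -prodrXl -prodf_div; apply: eq_bigr => j _.
rewrite /wf /cw natrM !natrX exprMn exprVn -mulrA; congr (_ * _).
by rewrite exprAC.
Qed.

End Work5.

Section Work6.
Variable R : rcfType.
Variable deg : posnat -> nat.
Local Notation w := (w R deg).
Local Notation B0 := (@B0 R deg).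

Definition sc (al : composition) : R :=
  (deg_fact deg al)%:R / Num.sqrt (zee al)%:R.

Lemma sc_neq0 al : sc al != 0.
Proof.
have D0 : ((deg_fact deg al)%:R : R) != 0 by rewrite pnatr_eq0 -lt0n dfE Dm_gt0.
have q0 : Num.sqrt ((zee al)%:R : R) != 0 by rewrite sqrtr_eq0 -ltNge ltr0n zeeE Zm_gt0.
by rewrite /sc mulf_neq0 ?invr_eq0.
Qed.

Lemma nvbarE al : nvbar R deg al = sc al *: << mon al >>.
Proof. by rewrite /nvbar vbarE. Qed.

Lemma bilinZ (B : Sym R -> Sym R -> R) : bilin_form B ->
  forall a b u v, B (a *: u) (b *: v) = a * b * B u v.
Proof.
move=> [hl hr] a b u v.
rewrite (linZ (fun c x y => hl c x y (b *: v))).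
by rewrite (linZ (fun c x y => hr c u x y)) mulrA.
Qed.

Lemma B0_bilin : bilin_form B0.
Proof. split; [exact: B0_linl | exact: B0_linr]. Qed.

Lemma B0_nvbar al be :
  B0 (nvbar R deg al) (nvbar R deg be) = (sortc al == sortc be)%:R.
Proof.
rewrite !nvbarE (bilinZ B0_bilin) B0_UU mon_perm -sortc_perm.
case: eqP => h; last by rewrite mul0r mulr0.
have hp : perm_eq al be by rewrite -sortc_perm h.
have hm : mon be = mon al by apply/eqP; rewrite mon_perm perm_sym.
rewrite /sc !dfE !zeeE hm wZD mul1r.
have Z0 : 0 <= ((Zm (mon al))%:R : R) by rewrite ler0n.
have sq := sqr_sqrtr Z0.
have q0 : Num.sqrt ((Zm (mon al))%:R : R) != 0.
  by rewrite sqrtr_eq0 -ltNge ltr0n Zm_gt0.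
have D0 : ((Dm deg (mon al))%:R : R) != 0 by rewrite pnatr_eq0 -lt0n Dm_gt0.
move: sq q0 D0; move: (Num.sqrt _) => q; move: (Dm _ _)%:R => D => <- q0 D0.
have -> : (true%:R : R) = 1 by [].
by field; rewrite D0 q0.
Qed.

Lemma mon_surj (m : monom) : exists al, m = mon al.
Proof.
elim/mon_ind: m => [|m i [al ->]]; first by exists [::]; rewrite /mon big_nil.
by exists (i :: al); rewrite /mon big_cons mulmC.
Qed.

Lemma uniq_B (B : Sym R -> Sym R -> R) : bilin_form B ->
  (forall al be, B (nvbar R deg al) (nvbar R deg be) = (sortc al == sortc be)%:R) ->
  forall x y, B x y = B0 x y.
Proof.
move=> hB hv.
have UUeq a b : B << a >> << b >> = B0 << a >> << b >>.
  have [al ->] := mon_surj a; have [be ->] := mon_surj b.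
  have e c : << mon c >> = (sc c)^-1 *: nvbar R deg c.
    by rewrite nvbarE scalerA mulVf ?sc_neq0 // scale1r.
  by rewrite !e (bilinZ hB) (bilinZ B0_bilin) hv B0_nvbar.
move: hB => [hl hr] x y; move: x.
apply: (lin_eq (f := fun x => B x y) (g := fun x => B0 x y)).
- by move=> a u v; rewrite hl.
- by move=> a u v; rewrite B0_linl.
move=> a; move: y.
apply: (lin_eq (f := fun y => B << a >> y) (g := fun y => B0 << a >> y)).
- by move=> c u v; rewrite hr.
- by move=> c u v; rewrite B0_linr.
exact: UUeq.
Qed.

End Work6.


Theorem mainTheorem7 (R : rcfType) (deg : posnat -> nat) :
  grading_ok deg ->
  (exists B : Sym R -> Sym R -> R, bilin_form B /\
     forall alpha beta : composition,
       B (nvbar R deg alpha) (nvbar R deg beta) = (sortc alpha == sortc beta)%:R) /\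
  (forall B : Sym R -> Sym R -> R, bilin_form B ->
     (forall alpha beta : composition,
        B (nvbar R deg alpha) (nvbar R deg beta) = (sortc alpha == sortc beta)%:R) ->
     [/\ hopf_pairing B, nondeg_pairing B & graded_pairing deg B]).
Proof.
move=> _; split.
  exists (@B0 R deg); split; [exact: B0_bilin | exact: B0_nvbar].
move=> B hB hv.
have -> : B = @B0 R deg.
  apply: functional_extensionality => x; apply: functional_extensionality => y.
  exact: uniq_B hB hv x y.
split; [exact: B0_hopf | exact: B0_nondeg | exact: B0_graded].
Qed.
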